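(* Let $d\ge1$ and let $H\subseteq\{0,\dots,d\}^{d+1}$ be an octahedral system with $|H|\le d^2$. Then $H$ contains no isolated edge; that is, for every $e\in H$ there exists $f\in H$, $f\neq e$, that differs from $e$ in exactly one coordinate.
   Context: Fix $d\ge1$. There are $d+1$ colours $0,1,\dots,d$, and each colour class consists of $d+1$ points labelled $0,\dots,d$. An edge is a tuple $e=(e_0,\dots,e_d)\in\{0,\dots,d\}^{d+1}$ (point $e_i$ of colour $i$ for each $i$); a hypergraph is a set $H$ of such tuples. For a colour $i$, an $\hat i$-transversal is a tuple $t=(t_k)_{k\ne i}\in\{0,\dots,d\}^{\{0,\dots,d\}\setminus\{i\}}$ (one point of every colour except $i$); an $\hat i$-octahedron is a pair of $\hat i$-transversals $t,t'$ with $t_k\neq t'_k$ for all $k\ne i$. $H$ is an octahedral system if for every colour $i$, every $\hat i$-octahedron $(t,t')$, the parity of $|\{e\in H: e_i=s,\ e_k\in\{t_k,t'_k\}\ \forall k\ne i\}|$ is the same for all $s\in\{0,\dots,d\}$. An edge $e\in H$ is isolated in $H$ if no other edge of $H$ differs from $e$ in exactly one coordinate. *)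

(* Defs.v *)
From mathcomp Require Import all_boot.
Set Implicit Arguments. Unset Strict Implicit. Unset Printing Implicit Defensive.

(* Colours and points are both 'I_(d.+1) = {0,...,d}. *)
Definition edge (d : nat) := {ffun 'I_d.+1 -> 'I_d.+1}.

(* An \hat i-transversal is represented by a function on all colours whose
   value at colour i is ignored. (t, t') is an \hat i-octahedron iff
   t k != t' k for all k != i. *)
Definition is_octahedron (d : nat) (i : 'I_d.+1) (t t' : edge d) : bool :=
  [forall k, (k != i) ==> (t k != t' k)].

Definition oct_count (d : nat) (H : {set edge d}) (i s : 'I_d.+1)
    (t t' : edge d) : nat :=
  #|[set e in H | (e i == s) &&
       [forall k, (k != i) ==> ((e k == t k) || (e k == t' k))]]|.

Definition octahedral (d : nat) (H : {set edge d}) : Prop :=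
  forall (i : 'I_d.+1) (t t' : edge d), is_octahedron i t t' ->
    forall s s' : 'I_d.+1, odd (oct_count H i s t t') = odd (oct_count H i s' t t').

Definition differ_in_one (d : nat) (e f : edge d) : bool :=
  #|[set k : 'I_d.+1 | e k != f k]| == 1.

(* Main.v *)
Require Import Defs.
From mathcomp Require Import all_boot.
From mathcomp Require Import zify.

Lemma card_fam (aT rT : finType) (F : aT -> pred rT) :
  #|[set f : {ffun aT -> rT} | [forall x, f x \in F x]]| = \prod_(x : aT) #|F x|.
Proof.
rewrite (_ : #|_| = #|(family F : simpl_pred {ffun aT -> rT})|); last first.
  by apply: eq_card => f; rewrite inE.
rewrite card_family foldrE big_map /image_mem.
by rewrite big_enum.
Qed.

Theorem lemma2 (d : nat) (hd : 1 <= d) (H : {set edge d})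
    (hoct : octahedral H) (hcard : #|H| <= d ^ 2) :
  forall e, e \in H -> exists f, [/\ f \in H, f != e & differ_in_one e f].
Proof.
move=> e He.
have [/existsP[f /and3P[Hf fe df]]|nok] :=
  boolP [exists f, [&& f \in H, f != e & differ_in_one e f]].
  by exists f.
exfalso.
set Inc := fun (f c : edge d) => [forall k, (f k == e k) || (f k == c k)].
have step1 : forall c : edge d, (forall k, c k != e k) ->
    exists f, [&& f \in H :\ e & Inc f c].
  move=> c hc.
  have [/existsP[f hf]|none] := boolP [exists f, [&& f \in H :\ e & Inc f c]].
    by exists f.
  have oct : is_octahedron ord0 e c.
    by apply/forallP => k; apply/implyP => _; rewrite eq_sym.
  have := hoct _ _ _ oct (e ord0) (c ord0).
  have -> : oct_count H ord0 (e ord0) e c = 1.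
    rewrite /oct_count (_ : [set x in H | _] = [set e]) ?cards1 //.
    apply/setP => f.
    rewrite !inE.
    have [->|fne] := eqVneq f e.
      rewrite He eqxx /=; apply/forallP => k; apply/implyP => _.
      by rewrite eqxx.
    apply/negbTE/negP => /and3P[Hf f0 /forallP fk].
    move/negP: none; apply; apply/existsP; exists f.
    rewrite !inE fne Hf /=; apply/forallP => k.
    have [->|kn] := eqVneq k ord0; first by rewrite f0.
    exact: (implyP (fk k) kn).
  have -> : oct_count H ord0 (c ord0) e c = 0.
    apply/eqP; rewrite /oct_count cards_eq0; apply/eqP/setP => f.
    rewrite !inE; apply/negbTE/negP => /and3P[Hf f0 /forallP fk].
    move/negP: none; apply; apply/existsP; exists f.
    have fne : f != e.
      by apply/negP => /eqP fe; move: f0; rewrite fe; move/eqP/esym/eqP; apply/negP/hc.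
    rewrite !inE fne Hf /=; apply/forallP => k.
    have [->|kn] := eqVneq k ord0; first by rewrite f0 orbT.
    exact: (implyP (fk k) kn).
  by [].
have step2 : forall f, f \in H :\ e -> 2 <= #|[set k | e k != f k]|.
  move=> f; rewrite !inE => /andP[fne Hf].
  have nd : ~~ differ_in_one e f.
    apply/negP => dd; move/negP: nok; apply; apply/existsP; exists f.
    by rewrite Hf fne dd.
  move: nd; rewrite /differ_in_one.
  case: (ltngtP #|[set k | e k != f k]| 1) => //.
  rewrite ltnS leqn0 cards_eq0 => /eqP h0.
  exfalso; move/negP: fne; apply; apply/eqP/ffunP => k.
  apply/eqP; apply/negP => /negP kn.
  have : k \in [set k | e k != f k] by rewrite inE eq_sym.
  by rewrite h0 inE.
set Cubes := [set c : edge d | [forall k, c k \in predC1 (e k)]].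
have cardC : #|Cubes| = d ^ d.+1.
  rewrite card_fam (eq_bigr (fun _ => d)); last first.
    by move=> k _; rewrite cardC1 card_ord.
  by rewrite prod_nat_const card_ord.
set X := d ^ d.-1.
have fib : forall f, f \in H :\ e -> \sum_(c in Cubes) (Inc f c : nat) <= X.
  move=> f hf.
  set D := [set k | e k != f k].
  set Fam := [set c : edge d | [forall k, c k \in
     [pred y | if e k != f k then y == f k else y != e k]]].
  apply: (@leq_trans (\sum_(c in Fam) 1)).
    rewrite big_mkcond [X in _ <= X]big_mkcond /=; apply: leq_sum => c _.
    case cC: (c \in Cubes) => //; case iC: (Inc f c) => //=.
    have -> : c \in Fam.
      rewrite inE; apply/forallP => k; rewrite inE /=.
      move: cC iC; rewrite inE => /forallP/(_ k) ck /forallP/(_ k) ik.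
      case: ifP => ef; last by [].
      by move: ik; rewrite eq_sym (negbTE ef) /= eq_sym.
    by [].
  rewrite sum1_card card_fam.
  rewrite (eq_bigr (fun k => if k \in D then 1 else d)); last first.
    move=> k _; rewrite inE.
    case: ifP => ef.
      by rewrite (eq_card (B := pred1 (f k))) ?card1 // => y; rewrite inE /= ef.
    by rewrite (eq_card (B := predC1 (e k))) ?cardC1 ?card_ord // => y; rewrite inE /= ef.
  rewrite (_ : \prod_k _ = \prod_(k in ~: D) d); last first.
    rewrite [RHS]big_mkcond; apply: eq_bigr => k _; rewrite inE.
    by rewrite !inE; case: ifP.
  rewrite prod_nat_const /X; apply: leq_pexp2l => //.
  have := cardsC D; rewrite card_ord.
  have := step2 f hf; rewrite -/D.
  lia.
have tot : d ^ d.+1 <= #|H :\ e| * X.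
  rewrite -cardC -sum1_card.
  apply: (@leq_trans (\sum_(c in Cubes) \sum_(f in H :\ e) (Inc f c : nat))).
    apply: leq_sum => c; rewrite inE => /forallP hc.
    have [f /andP[hf ifc]] : exists f, [&& f \in H :\ e & Inc f c].
      by apply: step1 => k; have := hc k; rewrite inE.
    by rewrite (bigD1 f) //= ifc.
  rewrite exchange_big /= -sum_nat_const; apply: leq_sum => f hf.
  exact: fib.
have hX : 0 < X by rewrite expn_gt0 hd.
have eX : d ^ d.+1 = d ^ 2 * X.
  by rewrite /X -expnD; congr (_ ^ _); lia.
have cH := cardsD1 e H; rewrite He in cH.
move: tot; rewrite eX.
set Y := d ^ 2 in hcard *; set n := #|H :\ e| in cH *.
nia.
Qed.
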